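(* Run the search algorithm described in the context (EMOA* ) on a directed graph $G=(V,E,\vec c)$ with non-negative edge cost vectors, start $v_o$, destination $v_d$, and a consistent heuristic $\vec h$. When the algorithm terminates, the returned set $\alpha(v_d)$ is a maximal set of cost-unique Pareto-optimal paths from $v_o$ to $v_d$: each label in $\alpha(v_d)$ represents (via parent pointers) a path from $v_o$ to $v_d$ whose cost vector is not dominated by the cost vector of any path from $v_o$ to $v_d$, distinct labels in $\alpha(v_d)$ have distinct cost vectors, and for every Pareto-optimal path from $v_o$ to $v_d$ there is a label in $\alpha(v_d)$ with the same cost vector.
   Context: The cost of a path $(v_1,\dots,v_\ell)$ is $\sum_{k=1}^{\ell-1}\vec c(v_k,v_{k+1})$. A path from $v_o$ to $v_d$ is Pareto-optimal if its cost vector is not dominated by the cost vector of any other path from $v_o$ to $v_d$. Graph $G=(V,E,\vec c)$ is directed, with $\vec c(e)\in(\mathbb{R}^+)^M$ for every edge. A heuristic $\vec h:V\to(\mathbb{R}^+)^M$ is consistent if $\vec h(v)\le\vec h(u)+\vec c(u,v)$ componentwise for every edge $(u,v)$, and $\vec h(v_d)=\vec 0$. A label is a pair $l=(v(l),\vec g(l))$ with $v(l)\in V$, $\vec g(l)\in(\mathbb{R}^+)^M$, together with a parent pointer; $\vec f(l)=\vec g(l)+\vec h(v(l))$. For $a,b$ vectors, $a\le b$ means componentwise $\le$; $a$ dominates $b$ iff $a\le b$ and $a\ne b$. OPEN is a priority queue of labels ordered by lexicographic order of $\vec f$. Each vertex $v$ has a frontier set $\alpha(v)$ of labels at $v$.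 Algorithm: initialize OPEN $=\{(v_o,\vec 0)\}$ (no parent), $\alpha(v)=\emptyset$ for all $v$. While OPEN is nonempty: extract from OPEN a label $l$ with lexicographically minimal $\vec f(l)$. If FrontierCheck($l$) (there is $l'\in\alpha(v(l))$ with $\vec g(l')\le\vec g(l)$) or SolutionCheck($l$) (there is $l^*\in\alpha(v_d)$ with $\vec g(l^* )\le\vec f(l)$) holds, discard $l$ and continue. Otherwise UpdateFrontier($l$): remove from $\alpha(v(l))$ all labels whose $\vec g$ is dominated by $\vec g(l)$, then add $l$ to $\alpha(v(l))$. If $v(l)=v_d$, continue. Otherwise expand $l$: for each edge $(v(l),v')\in E$, form $l'=(v',\vec g(l)+\vec c(v(l),v'))$ with parent $l$; if FrontierCheck($l'$) or SolutionCheck($l'$) holds discard $l'$, else insert $l'$ into OPEN. On termination return $\alpha(v_d)$. *)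

(* Defs.v *)
From HB Require Import structures.
From mathcomp Require Import all_boot all_order all_algebra.
Set Implicit Arguments. Unset Strict Implicit. Unset Printing Implicit Defensive.
Import Order.TTheory GRing.Theory Num.Theory.
Local Open Scope ring_scope.

(* A label: vertex, cost-so-far vector g, and an optional parent pointer. *)
Inductive label (V G : Type) : Type :=
  Label : V -> G -> option (label V G) -> label V G.

Definition lv {V G} (l : label V G) : V := let: Label v _ _ := l in v.
Definition lg {V G} (l : label V G) : G := let: Label _ g _ := l in g.
Definition lpar {V G} (l : label V G) : option (label V G) :=
  let: Label _ _ p := l in p.

Fixpoint path_of {V G} (l : label V G) : seq V :=
  match l with
  | Label v _ None => [:: v]
  | Label v _ (Some p) => rcons (path_of p) v
  end.

Definition vle {R : numDomainType} {M : nat} (a b : 'rV[R]_M) : bool :=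
  [forall i, a ord0 i <= b ord0 i].
Definition dom {R : numDomainType} {M : nat} (a b : 'rV[R]_M) : bool :=
  vle a b && (a != b).
Definition lexle {R : numDomainType} {M : nat} (a b : 'rV[R]_M) : Prop :=
  a = b \/ exists i : 'I_M,
    (forall j : 'I_M, (j < i)%N -> a ord0 j = b ord0 j) /\ a ord0 i < b ord0 i.

(* list membership without decidable equality *)
Fixpoint inl {T : Type} (x : T) (s : seq T) : Prop :=
  match s with [::] => False | y :: s' => y = x \/ inl x s' end.

Record state (V G : Type) := State {
  open : seq (label V G);
  alpha : V -> seq (label V G) }.

Section EMOA.
Variables (R : numDomainType) (M : nat) (V : finType) (E : rel V)
  (c : V -> V -> 'rV[R]_M) (h : V -> 'rV[R]_M) (vo vd : V).

Notation lab := (label V 'rV[R]_M).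

Fixpoint pcost (x : V) (p : seq V) : 'rV[R]_M :=
  match p with [::] => 0 | y :: p' => c x y + pcost y p' end.

Definition cost (s : seq V) : 'rV[R]_M :=
  match s with [::] => 0 | x :: p => pcost x p end.

Definition is_path_od (s : seq V) : Prop :=
  match s with
  | [::] => False
  | x :: p => x = vo /\ last x p = vd /\ path E x p
  end.

Definition pareto_optimal (s : seq V) : Prop :=
  is_path_od s /\ forall s', is_path_od s' -> ~~ dom (cost s') (cost s).

Definition fval (l : lab) : 'rV[R]_M := lg l + h (lv l).

Definition frontier_check (A : V -> seq lab) (l : lab) : bool :=
  has (fun l' => vle (lg l') (lg l)) (A (lv l)).
Definition solution_check (A : V -> seq lab) (l : lab) : bool :=
  has (fun ls => vle (lg ls) (fval l)) (A vd).
Definition pruned A l := frontier_check A l || solution_check A l.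

Definition update_frontier (A : V -> seq lab) (l : lab) : V -> seq lab :=
  fun u => if u == lv l then l :: filter (fun l' => ~~ dom (lg l) (lg l')) (A u)
           else A u.

Definition children (A : V -> seq lab) (l : lab) : seq lab :=
  filter (fun l' => ~~ pruned A l')
    [seq Label v' (lg l + c (lv l) v') (Some l) | v' <- enum V & E (lv l) v'].

Definition init_state : state V 'rV[R]_M :=
  State [:: Label vo 0 None] (fun _ => [::]).

(* One iteration of the main loop (extraction of a lexicographically
   f-minimal label; ties are resolved nondeterministically). *)
Definition step (st st' : state V 'rV[R]_M) : Prop :=
  exists o1 l o2,
    open st = o1 ++ l :: o2 /\
    (forall l', inl l' (open st) -> lexle (fval l) (fval l')) /\
    (if pruned (alpha st) l then st' = State (o1 ++ o2) (alpha st)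
     else let A' := update_frontier (alpha st) l in
          if lv l == vd then st' = State (o1 ++ o2) A'
          else st' = State (o1 ++ o2 ++ children A' l) A').

Inductive run : state V 'rV[R]_M -> Prop :=
  | run_init : run init_state
  | run_step st st' : run st -> step st st' -> run st'.

End EMOA.

(* Main.v *)
Require Import Defs.
From HB Require Import structures.
From Stdlib Require Import Setoid.
From mathcomp Require Import all_boot all_order all_algebra.
Import Order.TTheory GRing.Theory Num.Theory.
Local Open Scope ring_scope.
Set Implicit Arguments. Unset Strict Implicit. Unset Printing Implicit Defensive.

Section Inl.
Lemma inl_cat T (x : T) s1 s2 : inl x (s1 ++ s2) <-> inl x s1 \/ inl x s2.
Proof. elim: s1 => [|y s IH] /=; [tauto|]; rewrite IH; tauto. Qed.

Lemma inl_filter T (f : pred T) x s : inl x (filter f s) <-> inl x s /\ f x.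
Proof.
elim: s => [|y s IH] /=; first tauto.
case Hy: (f y) => /=; rewrite ?IH; split.
- case=> [Hyx|[H1 H2]]; [subst x; split; [left|]; done | tauto].
- case=> [[Hyx|H1] H2]; [left|]; tauto.
- tauto.
- case=> [[Hyx|H1] H2]; [subst y; by rewrite H2 in Hy | tauto].
Qed.

Lemma inl_map T U (f : T -> U) y s : inl y (map f s) <-> exists x, inl x s /\ f x = y.
Proof.
elim: s => [|z s IH] /=; first by split => // [[x []]].
rewrite IH; split.
- case=> [<-|[x [H1 H2]]]; first by exists z; auto. by exists x; auto.
- case=> x [[<-|H] H2]; first by left. by right; exists x.
Qed.

Lemma inl_mem (T : eqType) (x : T) s : inl x s <-> x \in s.
Proof.
elim: s => [|y s IH] //=; rewrite in_cons IH; split.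
- by case=> [->|->]; rewrite ?eqxx ?orbT.
- by case/orP => [/eqP ->|]; auto.
Qed.

Lemma hasP' T (p : pred T) s : has p s <-> exists x, inl x s /\ p x.
Proof.
elim: s => [|y s IH] /=; first by split => // [[x []]].
split.
- case/orP => [Hy|/IH [x [H1 H2]]]; first by exists y; auto. by exists x; auto.
- case=> x [[<-|H] H2]; first by rewrite H2. by apply/orP; right; apply/IH; exists x.
Qed.

Lemma allP' T (p : pred T) s : (forall x, inl x s -> p x) -> all p s.
Proof. elim: s => [|y s IH] //= H; rewrite H; auto. Qed.

Lemma pairwise_inl T (r : rel T) s a b : pairwise r s -> inl a s -> inl b s ->
  a = b \/ r a b \/ r b a.
Proof.
elim: s => [|y s IH] //; rewrite pairwise_cons => /andP [Hall Hp] /=.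
have Hy : forall x, inl x s -> r y x.
  move=> x; elim: s Hall {IH Hp} => [|z s IH'] //= /andP [H1 H2] [<-|]; auto.
case=> [<-|Ha] [<-|Hb]; auto.
Qed.
End Inl.

Section Vec.
Variables (R : realFieldType) (M : nat).
Implicit Types a b d : 'rV[R]_M.
Lemma vle_refl a : vle a a. Proof. by apply/forallP => i. Qed.
Lemma vle_trans a b d : vle a b -> vle b d -> vle a d.
Proof. move=> /forallP H1 /forallP H2; apply/forallP=> i; exact: le_trans (H1 i) (H2 i). Qed.
Lemma vle_anti a b : vle a b -> vle b a -> a = b.
Proof.
move=> /forallP H1 /forallP H2; apply/matrixP=> i j; rewrite (ord1 i).
by apply/eqP; rewrite eq_le H1 H2.
Qed.
Lemma vleD a b a' b' : vle a b -> vle a' b' -> vle (a + a') (b + b').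
Proof. move=> /forallP H1 /forallP H2; apply/forallP=> i; rewrite !mxE; exact: lerD. Qed.
Lemma vle_ndom a b : vle a b -> ~~ dom a b -> a = b.
Proof. by rewrite /dom => -> /=; rewrite negbK => /eqP. Qed.
Lemma dom_vle a b : dom a b -> vle a b.
Proof. by case/andP. Qed.
End Vec.

Section Alg.
Variables (R : realFieldType) (M : nat) (V : finType) (E : rel V)
  (c : V -> V -> 'rV[R]_M) (h : V -> 'rV[R]_M) (vo vd : V).
Hypothesis c_nonneg : forall u v, E u v -> forall i, 0 <= c u v ord0 i.
Hypothesis h_consistent : forall u v, E u v -> vle (h u) (h v + c u v).
Hypothesis h_dest : h vd = 0.
Notation lab := (label V 'rV[R]_M).
Implicit Types (A : V -> seq lab) (l w : lab).

Lemma c_ge0 u v : E u v -> vle 0 (c u v).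
Proof. move=> Huv; apply/forallP=> i; rewrite mxE; exact: c_nonneg. Qed.

Lemma pcost_rcons x p y : pcost c x (rcons p y) = pcost c x p + c (last x p) y.
Proof. elim: p x => [|z p IH] x /=; first by rewrite addr0 add0r. by rewrite IH addrA. Qed.

Lemma pcost_cat x p1 p2 : pcost c x (p1 ++ p2) = pcost c x p1 + pcost c (last x p1) p2.
Proof. elim: p1 x => [|z p IH] x /=; first by rewrite add0r. by rewrite IH addrA. Qed.

Lemma pcost_ge0 x p : path E x p -> vle 0 (pcost c x p).
Proof.
elim: p x => [|z p IH] x /=; first by move=> _; exact: vle_refl.
case/andP => Hxz Hp; rewrite -[0]addr0; apply: vleD; [exact: c_ge0|exact: IH].
Qed.

Lemma cons_h x p : path E x p -> vle (h x) (pcost c x p + h (last x p)).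
Proof.
elim: p x => [|z p IH] x /=; first by move=> _; rewrite add0r; exact: vle_refl.
case/andP => Hxz Hp; apply: vle_trans (h_consistent Hxz) _.
have -> : c x z + pcost c z p + h (last z p) = (pcost c z p + h (last z p)) + c x z.
  by rewrite -addrA addrC.
apply: vleD; [exact: IH | exact: vle_refl].
Qed.

Definition valid (l : lab) : Prop :=
  match path_of l with
  | [::] => False
  | x :: p => x = vo /\ last x p = lv l /\ path E x p /\ pcost c x p = lg l
  end.

Definition child (l : lab) (y : V) : lab := Label y (lg l + c (lv l) y) (Some l).

Lemma valid_child l y : valid l -> E (lv l) y -> valid (child l y).
Proof.
rewrite /valid /child /=; case: (path_of l) => [|x p] //= [-> [Hl [Hp Hc]]] Hy.
rewrite last_rcons rcons_path Hp Hl Hy pcost_rcons Hc; do ! split; by rewrite Hl.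
Qed.

Lemma children_inv A l l' : inl l' (children E c h vd A l) ->
  exists y, E (lv l) y /\ l' = child l y /\ ~~ pruned h vd A l'.
Proof.
rewrite /children inl_filter inl_map => -[[y [Hy <-]] Hpr]; exists y.
move: Hy; rewrite inl_mem mem_filter => /andP [Hy _]; by [].
Qed.

Lemma child_in A l y : E (lv l) y -> ~~ pruned h vd A (child l y) ->
  inl (child l y) (children E c h vd A l).
Proof.
move=> Hy Hpr; rewrite /children inl_filter inl_map; split=> //.
by exists y; split=> //; rewrite inl_mem mem_filter Hy mem_enum.
Qed.

Lemma upd_inv A l u w : inl w (update_frontier A l u) -> (w = l /\ u = lv l) \/ inl w (A u).
Proof.
rewrite /update_frontier; case: eqP => [->|_] /=; last by right.
case=> [<-|]; first by left. by rewrite inl_filter => -[]; right.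
Qed.

Lemma upd_new A l : inl l (update_frontier A l (lv l)).
Proof. by rewrite /update_frontier eqxx /=; left. Qed.

Lemma upd_mono A l u w : inl w (A u) ->
  exists w', inl w' (update_frontier A l u) /\ vle (lg w') (lg w).
Proof.
rewrite /update_frontier; case: eqP => [->|_] Hw; last by exists w; split; [|exact: vle_refl].
case Hd: (dom (lg l) (lg w)).
- by exists l; split; [left | exact: dom_vle].
- exists w; split; last exact: vle_refl.
  by right; rewrite inl_filter Hd.
Qed.

Definition rac (a b : lab) := ~~ vle (lg a) (lg b) && ~~ vle (lg b) (lg a).

Lemma upd_ac A l : ~~ frontier_check A l -> (forall u, pairwise rac (A u)) ->
  forall u, pairwise rac (update_frontier A l u).
Proof.
move=> Hf Hac u; rewrite /update_frontier; case: eqP => [Hu|_] //.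
rewrite pairwise_cons pairwise_filter ?Hac // andbT; apply: allP' => x.
rewrite inl_filter => -[Hx Hd].
have Hn : ~~ vle (lg x) (lg l).
  apply/negP => Hv; move/negP: Hf; apply; apply/hasP'; exists x; split=> //.
  by rewrite -Hu.
rewrite /rac Hn andbT; apply/negP => Hv.
by move/negP: Hn; apply; rewrite (vle_ndom Hv Hd) vle_refl.
Qed.

Definition INVv (st : state V 'rV[R]_M) :=
  (forall l, inl l (open st) -> valid l) /\
  (forall v l, inl l (alpha st v) -> valid l /\ lv l = v).

Lemma step_inv st st' : INVv st -> step E c h vd st st' -> INVv st'.
Proof.
move=> [Ho Ha] [o1 [l [o2 [Hop [_ Hst]]]]].
have Hl : valid l by apply: Ho; rewrite Hop inl_cat; right; left.
have Ho' : forall l', inl l' (o1 ++ o2) -> valid l'.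
  by move=> l'; rewrite inl_cat => H; apply: Ho; rewrite Hop inl_cat /=; tauto.
have Ha' : forall v l', inl l' (update_frontier (alpha st) l v) -> valid l' /\ lv l' = v.
  by move=> v l' /upd_inv [[-> ->]|]; [| apply: Ha].
move: Hst; case: ifP => _ /=; first by move=> ->; split.
case: ifP => _ -> ; first by split.
split=> //= l'; rewrite catA inl_cat => -[/Ho' //|/children_inv [y [Hy [-> _]]]].
exact: valid_child.
Qed.

Lemma step_ac st st' : (forall u, pairwise rac (alpha st u)) -> step E c h vd st st' ->
  (forall u, pairwise rac (alpha st' u)).
Proof.
move=> Hac [o1 [l [o2 [Hop [_ Hst]]]]].
move: Hst; case: ifP => Hp /=; first by move=> ->.
have Hf : ~~ frontier_check (alpha st) l by move: Hp; rewrite /pruned; case: frontier_check.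
by case: ifP => _ ->; apply: upd_ac.
Qed.

End Alg.

Section PathInv.
Variables (R : realFieldType) (M : nat) (V : finType) (E : rel V)
  (c : V -> V -> 'rV[R]_M) (h : V -> 'rV[R]_M) (vo vd : V).
Hypothesis c_nonneg : forall u v, E u v -> forall i, 0 <= c u v ord0 i.
Hypothesis h_consistent : forall u v, E u v -> vle (h u) (h v + c u v).
Hypothesis h_dest : h vd = 0.
Notation lab := (label V 'rV[R]_M).
Implicit Types (A : V -> seq lab) (l w : lab) (O : seq lab).
Variable p : seq V.
Hypothesis Hpath : path E vo p.
Hypothesis Hlast : last vo p = vd.

Definition SOL A := exists l, inl l (A vd) /\ vle (lg l) (pcost c vo p).
Definition Sx A q := exists l, inl l (A (last vo q)) /\ vle (lg l) (pcost c vo q).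
Definition Ox O q := exists l, inl l O /\ lv l = last vo q /\ vle (lg l) (pcost c vo q).
Definition PINV (st : state V 'rV[R]_M) :=
  (Ox (open st) [::] \/ Sx (alpha st) [::] \/ SOL (alpha st)) /\
  forall q y r, p = q ++ y :: r -> Sx (alpha st) q ->
    Sx (alpha st) (rcons q y) \/ Ox (open st) (rcons q y) \/ SOL (alpha st).

Lemma covered A l q r : p = q ++ r -> lv l = last vo q -> vle (lg l) (pcost c vo q) ->
  pruned h vd A l -> Sx A q \/ SOL A.
Proof.
move=> Hp Hv Hle; rewrite /pruned => /orP [/hasP' [w [Hw Hwl]]|/hasP' [w [Hw Hwl]]].
- by left; exists w; rewrite -Hv; split=> //; apply: vle_trans Hwl Hle.
- right; exists w; split=> //; apply: vle_trans Hwl _.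
  move: Hpath Hlast; rewrite Hp cat_path last_cat => /andP [_ Hr] Hl.
  rewrite pcost_cat /fval Hv; apply: vleD => //.
  have := cons_h h_consistent Hr; by rewrite Hl h_dest addr0.
Qed.

Lemma prefix_sol A q r : p = q ++ r -> last vo q = vd -> Sx A q -> SOL A.
Proof.
move=> Hp Hq [w [Hw Hle]]; exists w; rewrite -Hq; split=> //.
apply: vle_trans Hle _; rewrite Hp pcost_cat -[X in vle X _]addr0; apply: vleD.
  exact: vle_refl.
apply: (pcost_ge0 c_nonneg); move: Hpath; by rewrite Hp cat_path => /andP [].
Qed.

Lemma ox_remove o1 l o2 q : Ox (o1 ++ l :: o2) q ->
  Ox (o1 ++ o2) q \/ (lv l = last vo q /\ vle (lg l) (pcost c vo q)).
Proof.
move=> [w [Hw Hwq]]; move: Hw; rewrite !inl_cat /= => -[H|[Hlw|H]].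
- by left; exists w; rewrite inl_cat; auto.
- by right; subst w.
- by left; exists w; rewrite inl_cat; auto.
Qed.

Lemma sx_upd A l q : Sx A q -> Sx (update_frontier A l) q.
Proof.
move=> [w [Hw Hle]]; have [w' [Hw' Hle']] := upd_mono l Hw.
by exists w'; split=> //; apply: vle_trans Hle' Hle.
Qed.

Lemma sol_upd A l : SOL A -> SOL (update_frontier A l).
Proof.
move=> [w [Hw Hle]]; have [w' [Hw' Hle']] := upd_mono l Hw.
by exists w'; split=> //; apply: vle_trans Hle' Hle.
Qed.

Lemma sx_new A l q : lv l = last vo q -> vle (lg l) (pcost c vo q) ->
  Sx (update_frontier A l) q.
Proof. by move=> Hv Hle; exists l; rewrite -Hv; split=> //; apply: upd_new. Qed.

Lemma step_pinv st st' : PINV st -> step E c h vd st st' -> PINV st'.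
Proof.
move=> [H1 H2] [o1 [l [o2 [Hop [_ Hst]]]]].
rewrite Hop in H1 H2.
move: Hst; case: ifP => Hpr /=.
- move=> -> /=; split.
  + case: H1 => [Ho|H]; last by auto.
    case/ox_remove: Ho => [|[Hv Hle]]; first by auto.
    have [|] := @covered (alpha st) l [::] p erefl Hv Hle Hpr; auto.
  + move=> q y r Hp Hs; case: (H2 q y r Hp Hs) => [|[Ho|]]; try by auto.
    case/ox_remove: Ho => [|[Hv Hle]]; first by auto.
    have [||] := @covered (alpha st) l (rcons q y) r _ Hv Hle Hpr; auto.
    by rewrite cat_rcons.
- set A' := update_frontier (alpha st) l.
  have Hgen : forall O', (forall q, Ox (o1 ++ o2) q -> Ox O' q) ->
     (forall q y r, p = q ++ y :: r -> lv l = last vo q -> vle (lg l) (pcost c vo q) ->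
         Sx A' (rcons q y) \/ Ox O' (rcons q y) \/ SOL A') ->
     PINV (State O' A').
    move=> O' HO Hnew; split => /=.
    * case: H1 => [Ho|[Hs|Hs]].
      - case/ox_remove: Ho => [Ho|[Hv Hle]]; first by left; apply: HO.
        by right; left; apply: sx_new.
      - by right; left; apply: sx_upd.
      - by right; right; apply: sol_upd.
    * move=> q y r Hp [w [Hw Hle]].
      case/upd_inv: Hw => [[Hwl Hq]|Hw].
      - by subst w; apply: (Hnew q y r Hp (esym Hq) Hle).
      - have Hs : Sx (alpha st) q by exists w.
        case: (H2 q y r Hp Hs) => [Hs'|[Ho|Hs']].
        + by left; apply: sx_upd.
        + case/ox_remove: Ho => [Ho|[Hv Hle']]; first by right; left; apply: HO.
          by left; apply: sx_new.
        + by right; right; apply: sol_upd.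
  case: ifP => Hvd -> /=.
  + apply: Hgen => // q y r Hp Hq Hle.
    right; right; apply: (@prefix_sol A' q (y :: r) Hp).
      by rewrite -Hq; apply/eqP.
    by apply: sx_new.
  + apply: Hgen.
      move=> q [w [Hw Hwq]]; exists w; split=> //; rewrite catA inl_cat; by left.
    move=> q y r Hp Hq Hle.
    have Hy : E (lv l) y.
      by move: Hpath; rewrite Hp cat_path Hq /= => /andP [_ /andP []].
    have Hcl : lv (child c l y) = last vo (rcons q y) by rewrite last_rcons.
    have Hcle : vle (lg (child c l y)) (pcost c vo (rcons q y)).
      by rewrite pcost_rcons /= -Hq; apply: vleD => //; apply: vle_refl.
    case Hpc: (pruned h vd A' (child c l y)).
    * have [||] := @covered A' (child c l y) (rcons q y) r _ Hcl Hcle Hpc; auto.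
      by rewrite cat_rcons.
    * right; left; exists (child c l y); split=> //.
      rewrite !inl_cat; right; right; apply: child_in => //; by rewrite Hpc.
Qed.

End PathInv.

Section Final.
Variables (R : realFieldType) (M : nat) (V : finType) (E : rel V)
  (c : V -> V -> 'rV[R]_M) (h : V -> 'rV[R]_M) (vo vd : V).
Hypothesis c_nonneg : forall u v, E u v -> forall i, 0 <= c u v ord0 i.
Hypothesis h_consistent : forall u v, E u v -> vle (h u) (h v + c u v).
Hypothesis h_dest : h vd = 0.
Notation lab := (label V 'rV[R]_M).

Lemma run_invv st : run E c h vo vd st -> INVv E c vo st.
Proof.
elim=> [|st0 st1 _ IH Hs]; last exact: step_inv IH Hs.
split=> //= l [<-|//] /=; do ! split.
Qed.

Lemma run_ac st : run E c h vo vd st -> forall u, pairwise (@rac R M V) (alpha st u).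
Proof.
elim=> [|st0 st1 _ IH Hs]; last exact: step_ac IH Hs.
by [].
Qed.

Lemma run_pinv p : path E vo p -> last vo p = vd ->
  forall st, run E c h vo vd st -> PINV c vo vd p st.
Proof.
move=> Hp Hl st; elim=> [|st0 st1 _ IH Hs]; last exact: step_pinv Hs.
split.
- left; exists (Label vo 0 None); split; first by left.
  by split=> //; apply: vle_refl.
- by move=> q y r _ [w []].
Qed.

Lemma final_sol p st : path E vo p -> last vo p = vd ->
  run E c h vo vd st -> open st = [::] -> SOL c vo vd p (alpha st).
Proof.
move=> Hp Hl Hr Ho; have [H1 H2] := run_pinv Hp Hl Hr; rewrite Ho in H1 H2.
have Hox : forall q, ~ Ox c vo [::] q by move=> q [w []].
suff: forall q r, p = q ++ r -> Sx c vo (alpha st) q \/ SOL c vo vd p (alpha st).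
  move/(_ p [::]); rewrite cats0 => /(_ erefl) [[w [Hw Hle]]|//].
  by exists w; rewrite -Hl.
elim/last_ind => [|q y IH] r Hpqr.
- by case: H1 => [/Hox|].
- rewrite cat_rcons in Hpqr; case: (IH _ Hpqr) => [Hs|]; last by right.
  by case: (H2 q y r Hpqr Hs) => [|[/Hox|]]; auto.
Qed.
End Final.

Lemma ac_eq (R : realFieldType) (M : nat) (V : finType) (s : seq (label V 'rV[R]_M)) a b :
  pairwise (@rac R M V) s -> inl a s -> inl b s -> vle (lg a) (lg b) -> a = b.
Proof.
move=> Hp Ha Hb Hv; case: (pairwise_inl Hp Ha Hb) => [//|[/andP [H _]|/andP [_ H]]];
  by rewrite Hv in H.
Qed.

Lemma uniq_lg (R : realFieldType) (M : nat) (V : finType) (s : seq (label V 'rV[R]_M)) :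
  pairwise (@rac R M V) s -> uniq [seq lg l | l <- s].
Proof.
elim: s => [|a s IH] //; rewrite pairwise_cons => /andP [Hall Hp] /=.
rewrite IH // andbT; elim: s Hall {IH Hp} => [|b s IH] //= /andP [Hab Hall].
rewrite in_cons negb_or IH // andbT; apply/eqP => Heq.
by move: Hab; rewrite /rac Heq vle_refl.
Qed.

Unset Implicit Arguments.
Theorem theorem2 (R : realFieldType) (M : nat) (V : finType) (E : rel V)
  (c : V -> V -> 'rV[R]_M) (h : V -> 'rV[R]_M) (vo vd : V)
  (c_nonneg : forall u v, E u v -> forall i, 0 <= c u v ord0 i)
  (h_nonneg : forall v i, 0 <= h v ord0 i)
  (h_consistent : forall u v, E u v -> vle (h u) (h v + c u v))
  (h_dest : h vd = 0)
  (st : state V 'rV[R]_M)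
  (Hrun : run E c h vo vd st) (Hterm : open st = [::]) :
  (forall l, inl l (alpha st vd) ->
      pareto_optimal E c vo vd (path_of l) /\ cost c (path_of l) = lg l)
  /\ uniq [seq lg l | l <- alpha st vd]
  /\ (forall s, pareto_optimal E c vo vd s ->
        exists l, inl l (alpha st vd) /\ lg l = cost c s).
Proof.
have [Ho Ha] := run_invv Hrun.
have Hac := run_ac Hrun vd.
have Hval : forall l, inl l (alpha st vd) ->
    is_path_od E vo vd (path_of l) /\ cost c (path_of l) = lg l.
  move=> l /Ha [Hv Hlv]; move: Hv; rewrite /valid /is_path_od /cost.
  by case: (path_of l) => [|x q] // [-> [Hq [Hp Hc]]]; do ! split => //; rewrite Hq.
split; [|split].
- move=> l Hl; have [Hod Hc] := Hval l Hl; split=> //; split=> // s'.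
  case: s' => [|x' p'] //= [-> [Hl' Hp']].
  have [w [Hw Hle]] := final_sol c_nonneg h_consistent h_dest Hp' Hl' Hrun Hterm.
  rewrite Hc; apply/negP => /andP [Hv Hne].
  have Hwl : w = l by apply: (ac_eq Hac Hw Hl); exact: vle_trans Hle Hv.
  subst w; move/negP: Hne; apply; apply/eqP; exact: vle_anti Hv Hle.
- exact: uniq_lg.
- move=> [|x p] [Hod Hpo] //; case: Hod => Hx [Hl Hp]; subst x.
  have [w [Hw Hle]] := final_sol c_nonneg h_consistent h_dest Hp Hl Hrun Hterm.
  have [Hodw Hcw] := Hval w Hw.
  have := Hpo _ Hodw; rewrite Hcw => Hnd.
  by exists w; split=> //; apply: vle_ndom Hle Hnd.
Qed.
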